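(* Let $\alpha,\beta\in(0,\infty)$ and let $Y$ be a non-negative random variable with finite expectation $\mu=\mathbb{E}Y$ and (finite) variance $\sigma^2=\mathrm{Var}\,Y$. Then for all $c\in(0,\infty)$, $$\mathbb{E}\frac{1}{(\alpha+Y)^\beta}\leq\frac{1}{(\alpha+c)^\beta}+\frac{\beta(c-\mu)}{(\alpha+c)^{\beta+1}}+\frac{\sigma^2+(c-\mu)^2}{c^2}\Big(\frac{1}{\alpha^\beta}-\frac{\alpha+c(\beta+1)}{(\alpha+c)^{\beta+1}}\Big).$$ *)

(* Defs.v *)
From HB Require Import structures.
From mathcomp Require Import all_boot all_order all_algebra.
From mathcomp Require Import all_classical all_reals all_analysis.
Set Implicit Arguments. Unset Strict Implicit. Unset Printing Implicit Defensive.

(* Main.v *)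
Require Import Defs.
From HB Require Import structures.
From mathcomp Require Import all_boot all_order all_algebra.
From mathcomp Require Import all_classical all_reals all_analysis.
From mathcomp Require Import ring lra measurable_realfun.
Import Order.TTheory GRing.Theory Num.Theory.
Local Open Scope ring_scope.

Section h1.
Local Open Scope classical_set_scope.
Local Open Scope ring_scope.
Variable R : realType.

Lemma mvt0 (f df : R -> R) (u v : R) : 0 < u -> u < v ->
  (forall x : R, 0 < x -> is_derive x 1 f (df x)) ->
  exists2 t, u < t < v & f v - f u = df t * (v - u).
Proof.
move=> u0 uv fd.
have H1 : forall x, x \in `]u, v[%R -> is_derive x 1 f (df x).
  by move=> x; rewrite in_itv /= => /andP[ux _]; apply: fd; lra.
have [|t tin ->] := @MVT R f df u v uv H1.
  apply: derivable_within_continuous => x; rewrite in_itv /= => /andP[ux _].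
  have /fd [] : 0 < x by lra.
  by [].
by exists t => //; move: tin; rewrite in_itv.
Qed.
End h1.
Arguments mvt0 {R f df u v}.

Section h2.
Local Open Scope classical_set_scope.
Local Open Scope ring_scope.
Variable R : realType.

Lemma key (h h1 h2 : R -> R) (a b : R) : 0 < a -> a < b ->
  (forall x : R, 0 < x -> is_derive x 1 h (h1 x)) ->
  (forall x : R, 0 < x -> is_derive x 1 h1 (h2 x)) ->
  (forall x y : R, 0 < x -> x <= y -> h2 x <= h2 y) ->
  h a = 0 -> h b = 0 -> h1 b = 0 ->
  forall x, a <= x -> 0 <= h x.
Proof.
move=> a0 ab dh dh1 mon ha hb h1b.
have cvx : forall u v w : R, 0 < u -> u < v -> v < w ->
    (h1 v - h1 u) * (w - v) <= (h1 w - h1 v) * (v - u).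
  move=> u v w u0 uv vw.
  have [s /andP[us sv] ->] := mvt0 u0 uv dh1.
  have [t /andP[vt tw] ->] := mvt0 (lt_trans u0 uv) vw dh1.
  have : h2 s <= h2 t by apply: mon; lra.
  move=> st.
  rewrite -!mulrA [(v - u) * _]mulrC.
  apply: ler_wpM2r => //; apply: mulr_ge0; lra.
have [xi /andP[axi xib] hxi] := mvt0 a0 ab dh.
move: hxi; rewrite hb ha subrr => /esym /eqP; rewrite mulf_eq0 subr_eq0 (gt_eqF ab) orbF => /eqP h1xi.
move=> x ax.
case: (ltgtP x b) => [xb|bx|->]; last by rewrite hb.
- case: (lerP x xi) => [xxi|xix].
  + case: (ltgtP a x) ax => // [ax' _|<- _]; last by rewrite ha.
    have [t /andP[a_t tx] e] := mvt0 a0 ax' dh.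
    move: e; rewrite ha subr0 => ->.
    have := cvx t xi b (lt_trans a0 a_t) (lt_le_trans tx xxi) xib.
    rewrite h1xi h1b subrr mul0r => H.
    apply: mulr_ge0; last lra.
    have: 0 < b - xi by lra.
    move=> bxi; nra.
  + have x0 : 0 < x by lra.
    have [t /andP[xt tb] e] := mvt0 x0 xb dh.
    move: e; rewrite hb sub0r => /(congr1 (fun z => - z)); rewrite opprK => ->.
    have := cvx xi t b (lt_trans a0 axi) (lt_trans xix xt) tb.
    rewrite h1xi h1b subr0 sub0r => H.
    have : h1 t <= 0 by nra.
    move=> H2; nra.
- have b0 : 0 < b by lra.
  have [t /andP[bt tx] e] := mvt0 b0 bx dh.
  move: e; rewrite hb subr0 => ->.
  have := cvx xi b t (lt_trans a0 axi) xib bt.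
  rewrite h1xi h1b subrr mul0r subr0 => H.
  have : 0 <= h1 t by nra.
  move=> H2; nra.
Qed.
End h2.

Section h3.
Local Open Scope classical_set_scope.
Local Open Scope ring_scope.
Variable R : realType.
Lemma t1 (A B K b beta x : R) : 0 < x ->
  is_derive x 1 (fun x : R => A + B * (x - b) + K * (x - b) ^+ 2 - x `^ (- beta))
   (B + K * (2 * (x - b)) + beta * x `^ (- beta - 1)).
Proof.
move=> x0.
have e : (fun x : R => A + B * (x - b) + K * (x - b) ^+ 2 - x `^ (- beta)) =
  (cst A + cst B * (id - cst b) + cst K * (id - cst b) ^+ 2 - (@powR R)^~ (- beta)).
  by apply/funext => z.
have D := (is_deriveB (is_deriveD (is_deriveD (is_derive_cst A x 1)
     (is_deriveM (is_derive_cst B x 1) (is_deriveB (is_derive_id x 1) (is_derive_cst b x 1))))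
     (is_deriveM (is_derive_cst K x 1) (is_deriveX 2 (is_deriveB (is_derive_id x 1) (is_derive_cst b x 1)))))
     (@is_derive1_powR R (- beta) x x0)).
rewrite e; apply: (is_derive_eq D).
rewrite /= -![_ *: _]/(_ * _).
have -> : (id - cst b) x = x - b by [].
rewrite expr1; ring.
Qed.

Lemma t2 (B K b beta x : R) : 0 < x ->
  is_derive x 1 (fun x : R => B + K * (2 * (x - b)) + beta * x `^ (- beta - 1))
   (K * 2 + beta * ((- beta - 1) * x `^ (- beta - 1 - 1))).
Proof.
move=> x0.
have e : (fun x : R => B + K * (2 * (x - b)) + beta * x `^ (- beta - 1)) =
  (cst B + cst K * (cst 2 * (id - cst b)) + cst beta * (@powR R)^~ (- beta - 1)).
  by apply/funext => z.
have D := (is_deriveD (is_deriveD (is_derive_cst B x 1)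
     (is_deriveM (is_derive_cst K x 1) (is_deriveM (is_derive_cst (2:R) x 1)
        (is_deriveB (is_derive_id x 1) (is_derive_cst b x 1)))))
     (is_deriveM (is_derive_cst beta x 1) (@is_derive1_powR R (- beta - 1) x x0))).
rewrite e; apply: (is_derive_eq D).
rewrite /= -![_ *: _]/(_ * _).
ring.
Qed.

Lemma pointwise (al be c y : R) : 0 < al -> 0 < be -> 0 < c -> 0 <= y ->
  ((al + y) `^ be)^-1 <= ((al + c) `^ be)^-1 - be * ((al + c) `^ (be + 1))^-1 * (y - c)
    + ((al `^ be)^-1 - (al + c * (be + 1)) * ((al + c) `^ (be + 1))^-1) / c ^+ 2 * (y - c) ^+ 2.
Proof.
move=> a0 b0 c0 y0.
set b := al + c.
have bpos : 0 < b by rewrite /b; lra.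
set P := b `^ be.
have P0 : 0 < P by apply: powR_gt0.
have eG : b `^ (be + 1) = P * b.
  by rewrite powRD ?powRr1 ?ltW //; apply/implyP => _; rewrite gt_eqF.
set G := (b `^ (be + 1))^-1.
set K := ((al `^ be)^-1 - (al + c * (be + 1)) * G) / c ^+ 2.
have eN : forall z p : R, z `^ (- p) = (z `^ p)^-1 by move=> z p; rewrite powRN.
have H := @key R (fun x => P^-1 + (- be * G) * (x - b) + K * (x - b) ^+ 2 - x `^ (- be))
  (fun x => (- be * G) + K * (2 * (x - b)) + be * x `^ (- be - 1))
  (fun x => K * 2 + be * ((- be - 1) * x `^ (- be - 1 - 1))) al b a0 _
  (fun x x0 => t1 _ _ _ _ _ _ x0) (fun x x0 => t2 _ _ _ _ _ x0) _ _ _ _ (al + y) _.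
have e1 : al + y - b = y - c by rewrite /b; ring.
have e2 : - be - 1 = - (be + 1) by ring.
have e3 : - be - 1 - 1 = - (be + 2) by ring.
rewrite e1 e3 e2 !eN in H.
suff: 0 <= P^-1 + - be * G * (y - c) + K * (y - c) ^+ 2 - ((al + y) `^ be)^-1 by lra.
apply: H.
- rewrite /b; lra.
- move=> x z x0 xz; rewrite lerD2l.
  have zp : 0 < z `^ (be + 2) by apply: powR_gt0; lra.
  have xp : 0 < x `^ (be + 2) by apply: powR_gt0.
  have : (z `^ (be + 2))^-1 <= (x `^ (be + 2))^-1.
    rewrite lef_pV2 ?posrE //.
    by apply: ge0_ler_powR; rewrite ?nnegrE; lra.
  move=> H2.
  have H3 : 0 <= be * (be + 1) * ((x `^ (be + 2))^-1 - (z `^ (be + 2))^-1).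
    by apply: mulr_ge0; [apply: mulr_ge0; lra | rewrite subr_ge0].
  rewrite !eN -subr_ge0.
  set X := (x `^ (be + 2))^-1; set Z := (z `^ (be + 2))^-1.
  have -> : be * (- (be + 1) * Z) - be * (- (be + 1) * X) = be * (be + 1) * (X - Z) by ring.
  done.
- rewrite /K /G eG /b.
  have al0 : al `^ be != 0 by rewrite gt_eqF // powR_gt0.
  field.
  rewrite al0 !gt_eqF //; lra.
- rewrite subrr mulr0 expr0n /= mulr0 addr0 addr0 subrr //.
- rewrite subrr !mulr0 addr0 /G; ring.
- lra.
Qed.
End h3.

Theorem mainTheorem8 (d : measure_display) (T : measurableType d) (R : realType)
  (P : probability T R) (Y : {RV P >-> R}) (alpha beta c : R)
  (ha : 0 < alpha) (hb : 0 < beta) (hc : 0 < c)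
  (hY0 : forall x, 0 <= Y x)
  (hY2 : (Y : T -> R) \in Lfun P 2%:E) :
  let mu := fine ('E_P[Y])%E in
  let sigma2 := fine ('V_P[Y])%E in
  ('E_P[fun x => ((alpha + Y x) `^ beta)^-1%R] <=
    (((alpha + c) `^ beta)^-1
     + beta * (c - mu) / (alpha + c) `^ (beta + 1)
     + (sigma2 + (c - mu) ^+ 2) / c ^+ 2
       * ((alpha `^ beta)^-1 - (alpha + c * (beta + 1)) / (alpha + c) `^ (beta + 1)))%:E)%E.
Proof.
cbv zeta.
set mu := fine (expectation P Y).
set sigma2 := fine (variance P Y).
have Pfin : (P [set: T] \is a fin_num)%classic by rewrite probability_setT.
have Y1 : (Y : T -> R) \in Lfun P 1 by apply: Lfun_subset12.
have EY : ('E_P[Y] = mu%:E)%E by rewrite /mu fineK // expectation_fin_num.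
set Z := ((Y : T -> R) \- cst mu)%R.
have Z2 : Z \in Lfun P 2%:E.
  apply: rpredB => //; first by rewrite lee_fin ler1n.
  by move=> ?; exact: Lfun_cst.
have Z1 : Z \in Lfun P 1 by apply: Lfun_subset12.
have ZZ1 : (Z \* Z)%R \in Lfun P 1 by apply: Lfun2_mul_Lfun1.
have EZ : ('E_P[Z] = 0)%E.
  by rewrite expectationB ?Lfun_cst // EY expectation_cst subee.
have EZZ : ('E_P[Z \* Z] = sigma2%:E)%E.
  rewrite /sigma2 /variance covariance.unlock fineK //.
  exact: expectation_fin_num.
set Fb := ((alpha + c) `^ beta)^-1.
set G := ((alpha + c) `^ (beta + 1))^-1.
set K := ((alpha `^ beta)^-1 - (alpha + c * (beta + 1)) * G) / c ^+ 2.
set C0 := Fb - beta * G * (mu - c) + K * (mu - c) ^+ 2.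
set B0 := - beta * G + K * (2 * (mu - c)).
set Q := (cst C0 \+ B0 \o* Z \+ K \o* (Z \* Z))%R.
have hC : cst C0 \in Lfun P 1 by exact: Lfun_cst.
have hB : (B0 \o* Z)%R \in Lfun P 1 by apply: Lfun_scale.
have hK : (K \o* (Z \* Z))%R \in Lfun P 1 by apply: Lfun_scale.
have Q1 : Q \in Lfun P 1.
  by apply: rpredD => //; apply: rpredD.
have EQ : ('E_P[Q] = (C0 + K * sigma2)%:E)%E.
  rewrite /Q expectationD //; last by apply: rpredD.
  rewrite expectationD //.
  rewrite !expectationZl // expectation_cst EZ EZZ mule0 adde0.
  by rewrite -EFinM -EFinD.
have pw : forall x, ((alpha + Y x) `^ beta)^-1 <= Q x.
  move=> x; rewrite /Q /=.
  have H := @pointwise R alpha beta c (Y x) ha hb hc (hY0 x).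
  apply: (le_trans H).
  rewrite -/Fb -/G -/K /C0 /B0 /Z /=.
  by rewrite le_eqVlt; apply/orP; left; apply/eqP; ring.
have mL : measurable_fun setT (fun x => ((alpha + Y x) `^ beta)^-1).
  have -> : (fun x => ((alpha + Y x) `^ beta)^-1) = (fun x => (alpha + Y x) `^ (- beta)).
    by apply/funext => x; rewrite powRN.
  apply: measurableT_comp (measurable_powR _) _.
  apply: measurable_funD => //; exact: measurable_funPT.
have mQ : measurable_fun setT Q.
  by move: Q1; rewrite inE => /andP[/[!inE]/= mQ _].
apply: le_trans.
  apply: (expectation_le mL mQ _ _ (aeW _ pw)).
  - by move=> x; rewrite invr_ge0 powR_ge0.
  - by move=> x; apply: le_trans (pw x); rewrite invr_ge0 powR_ge0.
rewrite EQ lee_fin /C0 /K.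
rewrite le_eqVlt; apply/orP; left; apply/eqP; ring.
Qed.
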